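(* Let $1\le i,m\le n$. Then $\mathsf{L}^i_n=\langle\mathbf{ŁV}_{n+1},F_{i/n}\rangle$ is maximal with respect to $\mathsf{L}^{i/n}_m=\langle\mathbf{ŁV}_{m+1},F_{i/n}\cap\mathrm{ŁV}_{m+1}\rangle$ if and only if there are a prime number $q$ and an integer $k\ge1$ such that $n=q^k$ and $m=q^{k-1}$.
   Context: $\mathbf{ŁV}_{n+1}=(\{0,\frac1n,\dots,\frac{n-1}n,1\},\neg,\to)$ with $\neg x=1-x$, $x\to y=\min\{1,1-x+y\}$; $\mathbf{ŁV}_{m+1}$ is a subalgebra of $\mathbf{ŁV}_{n+1}$ iff $m\mid n$. $F_{i/n}=\{x\in\mathrm{ŁV}_{n+1}:x\ge i/n\}$. Matrix logic consequence: $\Gamma\vdash\varphi$ iff every evaluation sending $\Gamma$ into the designated set sends $\varphi$ into it. $L_1$ is maximal w.r.t. $L_2$ if ${\vdash_{L_1}}\subsetneq{\vdash_{L_2}}$ and for every formula $\varphi$ with $\vdash_{L_2}\varphi$ but $\nvdash_{L_1}\varphi$, the logic obtained from $L_1$ by adding all substitution instances of $\varphi$ as axioms coincides with $L_2$. *)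

(* Defs.v *)
From HB Require Import structures.
From mathcomp Require Import all_boot all_order all_algebra.
Set Implicit Arguments. Unset Strict Implicit. Unset Printing Implicit Defensive.
Import Order.TTheory GRing.Theory Num.Theory.
Local Open Scope ring_scope.

Inductive fm : Type :=
| Var : nat -> fm
| Neg : fm -> fm
| Imp : fm -> fm -> fm.

Fixpoint subst (s : nat -> fm) (f : fm) : fm :=
  match f with
  | Var p => s p
  | Neg a => Neg (subst s a)
  | Imp a b => Imp (subst s a) (subst s b)
  end.

Definition luk_neg (x : rat) : rat := 1 - x.
Definition luk_imp (x y : rat) : rat := Num.min 1 (1 - x + y).

Fixpoint eval (v : nat -> rat) (f : fm) : rat :=
  match f with
  | Var p => v p
  | Neg a => luk_neg (eval v a)
  | Imp a b => luk_imp (eval v a) (eval v b)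
  end.

(* Universe of LV_{n+1} = {0, 1/n, ..., (n-1)/n, 1}. *)
Definition LV (n : nat) (x : rat) : Prop :=
  exists k : nat, (k <= n)%N /\ x = k%:R / n%:R.

Definition logic := (fm -> Prop) -> fm -> Prop.

(* Matrix logic <A, D>, A given by universe predicate (closed under the ops),
   D the designated set. *)
Definition matrix_cons (A D : rat -> Prop) : logic :=
  fun Gamma phi =>
    forall v : nat -> rat, (forall p, A (v p)) ->
      (forall psi, Gamma psi -> D (eval v psi)) -> D (eval v phi).

Definition F (i n : nat) (x : rat) : Prop := LV n x /\ i%:R / n%:R <= x.

Definition L_in (i n : nat) : logic := matrix_cons (LV n) (F i n).

Definition L_inm (i n m : nat) : logic :=
  matrix_cons (LV m) (fun x => F i n x /\ LV m x).

Definition theorem (L : logic) (phi : fm) : Prop := L (fun _ => False) phi.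

Definition add_axiom (L : logic) (phi : fm) : logic :=
  fun Gamma psi => L (fun chi => Gamma chi \/ exists s, chi = subst s phi) psi.

Definition sub_logic (L1 L2 : logic) : Prop :=
  forall Gamma phi, L1 Gamma phi -> L2 Gamma phi.

Definition strict_sub_logic (L1 L2 : logic) : Prop :=
  sub_logic L1 L2 /\ exists Gamma phi, L2 Gamma phi /\ ~ L1 Gamma phi.

Definition same_logic (L1 L2 : logic) : Prop :=
  forall Gamma phi, L1 Gamma phi <-> L2 Gamma phi.

Definition maximal_wrt (L1 L2 : logic) : Prop :=
  strict_sub_logic L1 L2 /\
  forall phi, theorem L2 phi -> ~ theorem L1 phi ->
    same_logic (add_axiom L1 phi) L2.

(* Main.v *)
Require Import Defs.
From mathcomp Require Import all_boot all_order all_algebra.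
From mathcomp Require Import ring lra zify.
From Stdlib Require Import Classical ClassicalEpsilon.
Set Implicit Arguments. Unset Strict Implicit. Unset Printing Implicit Defensive.
Import Order.TTheory GRing.Theory Num.Theory.
Local Open Scope ring_scope.

Lemma minE' (x y : rat) : Num.min x y = if x <= y then x else y.
Proof. exact: minEle. Qed.

Ltac ifs := repeat match goal with |- context[if ?c then _ else _] =>
  lazymatch c with context[if _ then _ else _] => fail | _ =>
  let H := fresh "H" in case: (boolP c) => H;
   [ lazymatch c with (_ == _) => move/eqP: H => H | _ => idtac end
   | lazymatch c with
     | (_ == _) => move: H; rewrite neq_lt => /orP[H|H]
     | (_ <= _) => move: H; rewrite -ltNge => H
     | _ => idtac end ] end end.

Definition top := Imp (Var 0) (Var 0).
Definition odot a b := Neg (Imp a (Neg b)).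
Fixpoint mult (k : nat) (a : fm) : fm :=
  match k with 0 => Neg (Imp a a) | S k' => Imp (Neg (mult k' a)) a end.
Fixpoint pow (k : nat) (a : fm) : fm :=
  match k with 0 => Imp a a | S k' => odot (pow k' a) a end.

Lemma eval_top v : eval v top = 1.
Proof. rewrite /= /luk_imp minE'; case: ifP => _; lra. Qed.

Lemma eval_neg v a : eval v (Neg a) = luk_neg (eval v a).
Proof. by []. Qed.

Lemma eval_odot v a b : eval v (odot a b) = 1 - Num.min 1 (1 - eval v a + (1 - eval v b)).
Proof. by []. Qed.

Lemma eval_mult v k a : 0 <= eval v a <= 1 ->
  eval v (mult k a) = Num.min 1 (k%:R * eval v a).
Proof.
move=> /andP[h0 h1]; elim: k => [|k IH] /=.
  rewrite mul0r /luk_neg /luk_imp !minE' ler10 addrC subrK lexx; lra.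
have hkx : 0 <= k%:R * eval v a by rewrite mulr_ge0 // ler0n.
rewrite IH /luk_neg /luk_imp -natr1 mulrDl mul1r !minE'; ifs; lra.
Qed.

Lemma eval_pow v k a : 0 <= eval v a <= 1 ->
  eval v (pow k a) = Num.max 0 (1 - k%:R * (1 - eval v a)).
Proof.
move=> /andP[h0 h1]; have hk : forall k : nat, 0 <= k%:R :> rat by move=> ?; exact: ler0n.
elim: k => [|k IH] /=.
  rewrite mul0r /luk_imp minE' maxEle; ifs; lra.
have hkx : 0 <= k%:R * (1 - eval v a) by rewrite mulr_ge0 ?ler0n // subr_ge0.
rewrite IH /luk_neg /luk_imp -natr1 mulrDl mul1r !minE' !maxEle; ifs; lra.
Qed.

Lemma LV_bound N x : LV N x -> 0 <= x <= 1.
Proof.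
case=> k [hk ->]; case: N hk => [|N] hk.
  by rewrite invr0 mulr0 lexx ler01.
rewrite divr_ge0 ?ler0n //= ler_pdivrMr ?ltr0n // mul1r ler_nat //.
Qed.

Lemma LV1 N : (0 < N)%N -> LV N 1.
Proof. by move=> hN; exists N; rewrite leqnn divff // pnatr_eq0 -lt0n. Qed.

Lemma LV_neg N x : (0 < N)%N -> LV N x -> LV N (luk_neg x).
Proof.
move=> hN [k [hk ->]]; exists (N - k)%N; split; first by rewrite leq_subr.
rewrite /luk_neg natrB // mulrBl divff // pnatr_eq0 -lt0n //.
Qed.

Lemma LV_imp N x y : (0 < N)%N -> LV N x -> LV N y -> LV N (luk_imp x y).
Proof.
move=> hN [a [ha ->]] [b [hb ->]]; rewrite /luk_imp minE'.
case: ifP => h; first exact: LV1.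
have hN' : 0 < N%:R :> rat by rewrite ltr0n.
have hab : (b < a)%N.
  rewrite ltnNge; apply/negP => hab; move: h.
  have : a%:R / N%:R <= b%:R / N%:R :> rat by rewrite ler_pM2r ?invr_gt0 // ler_nat.
  move=> h2 /negbT; rewrite -ltNge; lra.
exists (N - (a - b))%N; split; first by rewrite leq_subr.
rewrite natrB; last by lia.
rewrite natrB; last by lia.
by rewrite mulrBl divff ?gt_eqF // mulrBl; ring.
Qed.

Definition force (n d : nat) (a : fm) : fm :=
  odot (pow n (mult d a)) (pow n (Imp a (Neg (mult d.-1 a)))).

Lemma eval_LV N v f : (0 < N)%N -> (forall p, LV N (v p)) -> LV N (eval v f).
Proof.
move=> hN hv; elim: f => [p|a IH|a IHa b IHb] /=; first exact: hv.
  exact: LV_neg.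
exact: LV_imp.
Qed.

Lemma eval_ext v1 v2 f : (forall p, v1 p = v2 p) -> eval v1 f = eval v2 f.
Proof. by move=> h; elim: f => [p|a IH|a IHa b IHb] //=; rewrite ?IH ?IHa ?IHb. Qed.

Lemma eval_subst v s f : eval v (subst s f) = eval (fun p => eval v (s p)) f.
Proof. by elim: f => [p|a IH|a IHa b IHb] //=; rewrite ?IH ?IHa ?IHb. Qed.

Lemma pow01 N n v b : (0 < N)%N -> (N <= n)%N -> LV N (eval v b) ->
  eval v (pow n b) = if eval v b == 1 then 1 else 0.
Proof.
move=> hN hNn hx; have [x0 x1] := andP (LV_bound hx).
rewrite eval_pow ?x0 ?x1 //.
case: hx => k [hk e].
have hNr : 0 < N%:R :> rat by rewrite ltr0n.
have e1 : N%:R * (1 - eval v b) = (N - k)%:R.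
  by rewrite e natrB // mulrBr mulr1 mulrCA divff ?gt_eqF // mulr1.
have h2 : N%:R <= n%:R :> rat by rewrite ler_nat.
have h3 : N%:R * (1 - eval v b) <= n%:R * (1 - eval v b) by rewrite ler_wpM2r // subr_ge0.
case: (ltnP k N) => hkN.
  have h4 : 1 <= (N - k)%:R :> rat by rewrite ler1n subn_gt0.
  have hx1 : eval v b != 1.
    by apply/eqP => h1; move: e1; rewrite h1 subrr mulr0 => h5; lra.
  rewrite (negbTE hx1) maxEle; case: ifP => // h6; lra.
have hkN' : k = N by apply/eqP; rewrite eqn_leq hk hkN.
have hN0 : N%:R != 0 :> rat by rewrite gt_eqF.
rewrite e hkN' divff // eqxx subrr mulr0 subr0 maxEle ler01 //.
Qed.

Lemma eval_force N n d v a : (0 < N)%N -> (N <= n)%N -> (0 < d)%N ->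
  (forall p, LV N (v p)) ->
  eval v (force n d a) = if eval v a == d%:R^-1 then 1 else 0.
Proof.
move=> hN hNn hd hv.
have [x0 x1] := andP (LV_bound (eval_LV a hN hv)).
rewrite /force eval_odot !(pow01 hN hNn) ?eval_LV //=.
rewrite /luk_imp /luk_neg !eval_mult ?x0 ?x1 //.
have hD : d.-1%:R = d%:R - 1 :> rat by rewrite -(prednK hd) -natr1 prednK // addrK.
rewrite hD mulrBl mul1r.
have hDr : 0 < d%:R :> rat by rewrite ltr0n.
have hxy : eval v a <= d%:R * eval v a by rewrite ler_peMl // ler1n.
have e : (eval v a == d%:R^-1) = (d%:R * eval v a == 1).
  apply/eqP/eqP => h; first by rewrite h divff ?gt_eqF.
  have hD0 : d%:R != 0 :> rat by rewrite gt_eqF.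
  by rewrite -(mulKf hD0 (eval v a)) h mulr1.
rewrite e.
have [->|xpos] : eval v a = 0 \/ 0 < eval v a.
  by rewrite lt_def; case: eqP; [left|right; rewrite x0].
  rewrite mulr0 subr0 [Num.min 1 0]minE' ler10 eq_sym oner_eq0 minE'; ifs; lra.
move: hxy; set y := d%:R * eval v a => hxy.
have hP : (Num.min 1 y == 1) = (1 <= y).
  rewrite minE'; case: ifP => h1; first by rewrite eqxx.
  by apply/eqP => h2; move/negbT: h1; rewrite h2 lexx.
have hQ : (Num.min 1 (1 - eval v a + (1 - Num.min 1 (y - eval v a))) == 1) = (y <= 1).
  apply/eqP/idP => h1.
    move: h1; rewrite !minE'; ifs; lra.
  rewrite !minE'; ifs; lra.
rewrite hP hQ; case: ltgtP => h1; rewrite minE'; ifs; lra.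
  exact: (eval_LV (Imp a (Neg (mult d.-1 a))) hN hv).
exact: eval_LV.
Qed.

Lemma LV_inv N d : (0 < N)%N -> (0 < d)%N -> LV N (d%:R^-1) -> (d %| N)%N.
Proof.
move=> hN hd [k [hk e]].
have hN0 : N%:R != 0 :> rat by rewrite pnatr_eq0 -lt0n.
have hd0 : d%:R != 0 :> rat by rewrite pnatr_eq0 -lt0n.
have h : N%:R = (k%:R / N%:R) * N%:R * d%:R :> rat by rewrite -e; field.
rewrite divfK // -natrM in h; move/eqP: h; rewrite eqr_nat => /eqP ->.
exact: dvdn_mull.
Qed.

Lemma LV_invd N d : (0 < N)%N -> (d %| N)%N -> LV N (d%:R^-1).
Proof.
move=> hN /dvdnP[k hk]; exists k; split.
  by rewrite hk in hN *; apply: leq_pmulr; move: hN; rewrite muln_gt0 => /andP[].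
have hd0 : d%:R != 0 :> rat by rewrite pnatr_eq0; rewrite hk in hN; apply/eqP => h; rewrite h in hN; lia.
have hk0 : k%:R != 0 :> rat by rewrite pnatr_eq0; rewrite hk in hN; apply/eqP => h; rewrite h in hN; lia.
by rewrite hk natrM; field; rewrite hd0 hk0.
Qed.

Lemma LV_div m n x : (0 < n)%N -> (m %| n)%N -> LV m x -> LV n x.
Proof.
move=> hn /dvdnP[c hc] [k [hk ->]]; exists (k * c)%N; split.
  by rewrite hc mulnC leq_mul2l hk orbT.
have hc0 : c%:R != 0 :> rat by rewrite pnatr_eq0; rewrite hc in hn; apply/eqP => h; rewrite h in hn; lia.
have [hm0'|hm] := eqVneq m 0%N; first by rewrite hc hm0' in hn; lia.
have hm0 : m%:R != 0 :> rat by rewrite pnatr_eq0.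
by rewrite hc !natrM; field; rewrite hm0 hc0.
Qed.

Section Main.
Variables (i n : nat).
Hypothesis (hi1 : (1 <= i)%N) (hin : (i <= n)%N).

Lemma hn0 : (0 < n)%N. Proof. exact: leq_trans hi1 hin. Qed.

Lemma F1 : F i n 1.
Proof.
split; first exact: LV1 hn0.
have hn : 0 < n%:R :> rat by rewrite ltr0n hn0.
by rewrite ler_pdivrMr // mul1r ler_nat.
Qed.

Lemma F0 : ~ F i n 0.
Proof.
case=> _; have hn : 0 < n%:R :> rat by rewrite ltr0n hn0.
by rewrite ler_pdivrMr // mul0r lern0 => /eqP hi0; move: hi1; rewrite hi0.
Qed.

Lemma force_des N d v : (0 < N)%N -> (N <= n)%N -> (0 < d)%N -> (forall p, LV N (v p)) ->
  F i n (eval v (force n d (Var 0))) -> v 0%N = d%:R^-1.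
Proof.
move=> hN hNn hd hv; rewrite (eval_force _ hN hNn hd hv) /=.
by case: eqP => // _ /F0.
Qed.

Lemma force_val1 N d v : (0 < N)%N -> (N <= n)%N -> (0 < d)%N -> (forall p, LV N (v p)) ->
  v 0%N = d%:R^-1 -> eval v (force n d (Var 0)) = 1.
Proof. by move=> hN hNn hd hv h; rewrite (eval_force _ hN hNn hd hv) /= h eqxx. Qed.

Lemma force_ndiv N d v : (0 < N)%N -> (N <= n)%N -> (0 < d)%N -> (forall p, LV N (v p)) ->
  ~~ (d %| N)%N -> eval v (force n d (Var 0)) = 0.
Proof.
move=> hN hNn hd hv hdN; rewrite (eval_force _ hN hNn hd hv) /=.
case: eqP => // h; have := hv 0%N; rewrite h => /(LV_inv hN hd); by rewrite (negbTE hdN).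
Qed.

End Main.

Section Gen.
Variables (n j p0 : nat) (v : nat -> rat).
Hypotheses (hn : (0 < n)%N) (hj : (j <= n)%N) (hcop : coprime j n) (hv0 : v p0 = j%:R / n%:R).

Definition Gen (c : rat) := exists t, eval v t = c.

Lemma nR0 : n%:R != 0 :> rat. Proof. by rewrite pnatr_eq0 -lt0n. Qed.

Lemma Gen_sub a b : (b <= a)%N -> (a <= n)%N -> Gen (a%:R / n%:R) -> Gen (b%:R / n%:R) ->
  Gen ((a - b)%N%:R / n%:R).
Proof.
move=> hba han [ta ea] [tb eb]; exists (odot ta (Neg tb)).
rewrite eval_odot /= /luk_neg ea eb natrB // mulrBl.
have hnr : 0 < n%:R :> rat by rewrite ltr0n.
have : b%:R / n%:R <= a%:R / n%:R :> rat by rewrite ler_pM2r ?invr_gt0 // ler_nat.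
move=> h; rewrite minE'; ifs; lra.
Qed.

Lemma Gen_euclid s : forall a b, (a + b <= s)%N -> (a <= n)%N -> (b <= n)%N ->
  Gen (a%:R / n%:R) -> Gen (b%:R / n%:R) -> Gen ((gcdn a b)%:R / n%:R).
Proof.
elim: s => [|s IH] a b hs ha hb Ga Gb.
  have -> : a = 0%N by lia.
  by rewrite gcd0n.
have [->|a0] := eqVneq a 0%N; first by rewrite gcd0n.
have [->|b0] := eqVneq b 0%N; first by rewrite gcdn0.
case: (leqP a b) => hab.
  have e : gcdn a b = gcdn a (b - a) by rewrite -{1}(subnKC hab) gcdnDl.
  rewrite e; apply: IH => //; first by lia.
    by lia.
  exact: Gen_sub.
have e : gcdn a b = gcdn (a - b) b by rewrite gcdnC -{1}(subnKC (ltnW hab)) gcdnDl gcdnC.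
rewrite e; apply: IH => //; first by lia.
  by lia.
exact: Gen_sub (ltnW hab) _ _ _.
Qed.

Lemma Gen_all c : LV n c -> Gen c.
Proof.
case=> k [hk ->].
have G1 : Gen (1%N%:R / n%:R).
  move: hcop; rewrite /coprime => /eqP <-.
  apply: (Gen_euclid (s := (j + n)%N)) => //.
    by exists (Var p0).
  by exists top; rewrite eval_top divff // nR0.
case: G1 => t et; exists (mult k t).
have hnr : 0 < n%:R :> rat by rewrite ltr0n.
have hb : 0 <= eval v t <= 1.
  by rewrite et divr_ge0 ?ler0n //= ler_pdivrMr // mul1r ler1n.
rewrite eval_mult // et mul1r minE'.
have : k%:R / n%:R <= 1 :> rat by rewrite ler_pdivrMr // mul1r ler_nat.
by rewrite mulrC; case: ifP => // h1 h2; apply/eqP; rewrite eq_le h1 h2.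
Qed.

End Gen.

Section Logic.
Variables (i n m : nat).
Hypotheses (hi1 : (1 <= i)%N) (hin : (i <= n)%N) (hm1 : (1 <= m)%N) (hmn : (m <= n)%N).

Let hn : (0 < n)%N := hn0 hi1 hin.

Definition Gam d : fm -> Prop := fun chi => chi = force n d (Var 0).
Definition psi d := Neg (force n d (Var 0)).

Lemma cst_LV N d : (0 < N)%N -> (d %| N)%N -> forall p, LV N ((fun _ : nat => d%:R^-1 : rat) p).
Proof. by move=> hN hd p; exact: LV_invd. Qed.

Lemma notsub : ~~ (m %| n)%N -> ~ sub_logic (L_in i n) (L_inm i n m).
Proof.
move=> hnd hsub.
have h1 : L_in i n (Gam m) (psi m).
  move=> v hv hG; exfalso.
  have := force_des hi1 hin hn (leqnn n) hm1 hv (hG _ erefl) => h.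
  by move: (hv 0%N); rewrite h => /(LV_inv hn hm1); rewrite (negbTE hnd).
have hv := cst_LV hm1 (dvdnn m).
have e1 := force_val1 (n := n) (d := m) hm1 hmn hm1 hv erefl.
have h2 : forall psi0, Gam m psi0 -> F i n (eval (fun _ => m%:R^-1) psi0) /\ LV m (eval (fun _ => m%:R^-1) psi0).
  by move=> psi0 ->; rewrite e1; split; [exact: F1 | exact: LV1].
have [h3 _] := hsub _ _ h1 _ hv h2.
by move: h3; rewrite /psi eval_neg e1 /luk_neg subrr; exact: F0.
Qed.

Lemma sub_div : (m %| n)%N -> sub_logic (L_in i n) (L_inm i n m).
Proof.
move=> hd G phi h v hv hG; split; last exact: eval_LV.
apply: h; first by move=> p; exact: LV_div (hv p).
by move=> psi0 /hG [].
Qed.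

Lemma strict_lt : (m %| n)%N -> (m < n)%N -> strict_sub_logic (L_in i n) (L_inm i n m).
Proof.
move=> hd hlt; split; first exact: sub_div.
have hnm : ~~ (n %| m)%N by apply/negP => /(dvdn_leq hm1); rewrite leqNgt hlt.
exists (Gam n), (psi n); split.
  move=> v hv hG; exfalso.
  have := hG _ erefl; rewrite (force_ndiv (n := n) hm1 hmn hn hv hnm) => -[hh _]; exact: (F0 hi1 hin hh).
move=> h; have hv := cst_LV hn (dvdnn n).
have e1 := force_val1 (n := n) (d := n) hn (leqnn n) hn hv erefl.
have := h _ hv; rewrite /psi eval_neg e1 /luk_neg subrr => h2; apply: F0 hi1 hin _; apply: h2.
by move=> psi0 ->; rewrite e1; exact: F1.
Qed.

Lemma not_strict_eq : m = n -> ~ strict_sub_logic (L_in i n) (L_inm i n m).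
Proof.
move=> e [_ [G [phi [h1 h2]]]]; apply: h2 => v hv hG.
rewrite e in h1; have [] := h1 v hv => //.
by move=> psi0 /hG => hF; split => //; case: hF.
Qed.


Lemma not_max d : (m %| n)%N -> (m < n)%N -> (0 < d)%N -> (d %| n)%N -> d != n ->
  ~~ (d %| m)%N ->
  ~ (forall phi, theorem (L_inm i n m) phi -> ~ theorem (L_in i n) phi ->
       same_logic (add_axiom (L_in i n) phi) (L_inm i n m)).
Proof.
move=> hd hlt hd0 hdn hdne hdm H.
have hdlt : (d < n)%N by rewrite ltn_neqAle hdne (dvdn_leq hn hdn).
have hnm : ~~ (n %| m)%N by apply/negP => /(dvdn_leq hm1); rewrite leqNgt hlt.
have hnd : ~~ (n %| d)%N by apply/negP => /(dvdn_leq hd0); rewrite leqNgt hdlt.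
have T : theorem (L_inm i n m) (psi n).
  move=> v hv _; rewrite /psi eval_neg (force_ndiv (n := n) hm1 hmn hn hv hnm) /luk_neg subr0.
  by split; [exact: F1 | exact: LV1].
have NT : ~ theorem (L_in i n) (psi n).
  move=> h; have hv := cst_LV hn (dvdnn n).
  have e1 := force_val1 (n := n) (d := n) hn (leqnn n) hn hv erefl.
  have := h _ hv (fun _ f => match f with end).
  by rewrite /psi eval_neg e1 /luk_neg subrr; exact: F0.
have [_ h2] := H _ T NT (Gam d) (psi d).
have h3 : L_inm i n m (Gam d) (psi d).
  move=> v hv hG; exfalso; have := hG _ erefl.
  rewrite (force_ndiv (n := n) hm1 hmn hd0 hv hdm) => -[hh _]; exact: (F0 hi1 hin hh).
have h4 := h2 h3.
have hvd := cst_LV hd0 (dvdnn d).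
have hvn := cst_LV hn hdn.
have e1 := force_val1 (n := n) (d := d) hd0 (ltnW hdlt) hd0 hvd erefl.
have := h4 _ hvn.
rewrite /psi eval_neg e1 /luk_neg subrr => h5; apply: (F0 hi1 hin); apply: h5.
move=> chi [-> | [s ->]]; first by rewrite e1; exact: F1.
rewrite eval_subst eval_neg (force_ndiv (n := n) (N := d) hd0 (ltnW hdlt) hn _ hnd).
  by rewrite /luk_neg subr0; exact: F1.
by move=> p; exact: eval_LV hd0 hvd.
Qed.

End Logic.

Lemma LV_from_div n m q x : (0 < m)%N -> n = (m * q)%N -> (0 < q)%N -> LV n x ->
  (forall j, (j <= n)%N -> x = j%:R / n%:R -> (q %| j)%N) -> LV m x.
Proof.
move=> hm en hq [j [hj ex]] hdiv.
have /dvdnP[j' ej] := hdiv j hj ex.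
exists j'; split.
  by rewrite en ej in hj; rewrite -(leq_pmul2r hq).
have hm0 : m%:R != 0 :> rat by rewrite pnatr_eq0 -lt0n.
have hq0 : q%:R != 0 :> rat by rewrite pnatr_eq0 -lt0n.
by rewrite ex ej en !natrM; field; rewrite hm0 hq0.
Qed.

Section Max.
Variables (i n m q k : nat).
Hypotheses (hi1 : (1 <= i)%N) (hin : (i <= n)%N) (hq : prime q) (hk : (1 <= k)%N)
  (en : n = (q ^ k)%N) (em : m = (q ^ k.-1)%N).

Let hn : (0 < n)%N := hn0 hi1 hin.
Lemma hm0 : (0 < m)%N. Proof. by rewrite em expn_gt0 prime_gt0. Qed.
Lemma nmq : n = (m * q)%N. Proof. by rewrite en em -expnSr prednK. Qed.
Lemma mdivn : (m %| n)%N. Proof. by rewrite nmq dvdn_mulr. Qed.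

Lemma max_part : forall phi, theorem (L_inm i n m) phi -> ~ theorem (L_in i n) phi ->
  same_logic (add_axiom (L_in i n) phi) (L_inm i n m).
Proof.
move=> phi T NT G psi0; split.
  move=> h v hv hG; split; last exact: eval_LV hm0 hv.
  have hvn : forall p, LV n (v p) by move=> p; exact: LV_div hn mdivn (hv p).
  apply: h hvn _ => chi [/hG [] // | [s ->]].
  rewrite eval_subst.
  by have [] := T _ (fun p => eval_LV (s p) hm0 hv) (fun _ f => match f with end).
move=> h v hv hA.
have hvm : forall p, LV m (v p).
  move=> p; apply: (LV_from_div hm0 nmq (prime_gt0 hq) (hv p)) => j hj ej.
  apply: contraT => hqj.
  have hcop : coprime j n.
    by rewrite en coprime_sym coprimeXl // prime_coprime.
  exfalso; apply: NT => w hw _.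
  apply: NNPP => hw'.
  pose s := fun x => proj1_sig (constructive_indefinite_description _
                        (Gen_all hn hj hcop ej (hw x))).
  have es : forall x, eval v (s x) = w x.
    by move=> x; rewrite /s; case: constructive_indefinite_description.
  apply: hw'.
  have := hA (subst s phi) (or_intror (ex_intro _ s erefl)).
  by rewrite eval_subst (eval_ext phi es).
have := h v hvm.
case; last by [].
move=> chi hG; split; first by apply: hA; left.
exact: eval_LV hm0 hvm.
Qed.

End Max.

Lemma numth m n : (0 < m)%N -> (m %| n)%N -> (m < n)%N ->
  (exists q k : nat, prime q /\ (1 <= k)%N /\ n = (q ^ k)%N /\ m = (q ^ k.-1)%N) \/
  (exists d, (0 < d)%N /\ (d %| n)%N /\ d != n /\ ~~ (d %| m)%N).
Proof.
move=> hm hmn hlt.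
have hn : (0 < n)%N by apply: leq_ltn_trans hlt.
set r := (n %/ m)%N.
have enr : n = (m * r)%N by rewrite mulnC divnK.
have hr : (1 < r)%N.
  rewrite ltnNge; apply/negP => hr1.
  have := leq_mul (leqnn m) hr1; rewrite muln1 -enr => hle.
  by move: hlt; rewrite ltnNge hle.
set p := pdiv r.
have hp : prime p by apply: pdiv_prime.
have hpr : (p %| r)%N by apply: pdiv_dvd.
have hp1 : (1 < p)%N by apply: prime_gt1.
have [epr|nepr] := eqVneq r p.
  set e := logn p n.
  have hdn : (p ^ e %| n)%N by apply: pfactor_dvdnn.
  have [ed|ned] := eqVneq (p ^ e)%N n.
    left; exists p, e.
    have he : (1 <= e)%N.
      rewrite lt0n; apply/eqP => e0; move: ed; rewrite e0 expn0 => en1.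
      by move: hlt; rewrite -en1 ltnS leqNgt hm.
    split => //; split => //; split => //.
    apply/eqP; rewrite -(eqn_pmul2r (prime_gt0 hp)) -expnSr prednK // ed enr epr //.
  right; exists (p ^ e)%N; split; first by rewrite expn_gt0 prime_gt0.
  split => //; split => //.
  apply/negP => hdm.
  have : (p ^ e.+1 %| n)%N by rewrite expnSr enr epr dvdn_mul.
  by rewrite pfactor_dvdn // ltnn.
right; exists (m * p)%N; split; first by rewrite muln_gt0 hm prime_gt0.
split; first by rewrite enr dvdn_mul.
split.
  apply/negP => /eqP; rewrite enr => /eqP; rewrite eqn_pmul2l // => /eqP ep.
  by move: nepr; rewrite ep eqxx.
apply/negP => /(dvdn_leq hm); rewrite -{2}(muln1 m) leq_mul2l leqNgt hp1 orbF.
by move=> /eqP h0; move: hm; rewrite h0.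
Qed.

Theorem corollary5p3 (i m n : nat) :
  (1 <= i <= n)%N -> (1 <= m <= n)%N ->
  (maximal_wrt (L_in i n) (L_inm i n m) <->
   exists q k : nat, prime q /\ (1 <= k)%N /\ n = (q ^ k)%N /\ m = (q ^ k.-1)%N).
Proof.
move=> /andP[hi1 hin] /andP[hm1 hmn]; split.
  move=> [[hsub hstr] hmax].
  have hd : (m %| n)%N.
    by apply: contraT => hnd; exfalso; exact: (notsub hi1 hin hm1 hmn hnd hsub).
  have hlt : (m < n)%N.
    rewrite ltn_neqAle hmn andbT; apply/eqP => e.
    exact: (not_strict_eq e (conj hsub hstr)).
  have [//|[d [hd0 [hdn [hdne hdm]]]]] := numth hm1 hd hlt.
  by exfalso; apply: (not_max hi1 hin hm1 hmn hd hlt hd0 hdn hdne hdm).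
move=> [q [k [hq [hk [en em]]]]].
have hd := mdivn hk en em.
have hlt : (m < n)%N.
  rewrite (nmq hk en em) -{1}(muln1 m) ltn_pmul2l ?prime_gt1 //.
split; first exact: strict_lt.
move=> phi; exact: (max_part hi1 hin hq hk en em).
Qed.
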